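(* There exists a constant $C_0$ such that for every $m,\ell\ge1$, every choice of $\sigma_1\ge\sigma_2\ge\dots\ge\sigma_m\ge0$, $\rho_1\ge\rho_2\ge\dots\ge\rho_\ell>0$, $b_1,\dots,b_m>0$, $c_1,\dots,c_\ell>0$, every $1\le k\le m$, and both choices of sign, \[ \Bigl|\int_0^{\sqrt{\rho_\ell}}e^{\frac12i\lambda^2}e^{\pm i\sum_{j=1}^mb_j\sqrt{\lambda^2+\sigma_j}}\exp\Bigl(-\sum_{i=1}^\ell c_i\sqrt{\rho_i-\lambda^2}\Bigr)\frac{\lambda}{\sqrt{\lambda^2+\sigma_k}}\,d\lambda\Bigr|\le C_0\min\Bigl[(1+\sigma_1+\rho_\ell)^{1/4},\ m^{3/2}b_k^{-1}\max_{1\le j\le m}b_j\Bigr]. \] *)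

(* Defs.v *)
From Stdlib Require Import Reals List.
From Coquelicot Require Import Coquelicot.
Open Scope R_scope.

Definition cis (x : R) : C := (cos x, sin x).

Definition sum1 (f : nat -> R) (n : nat) : R := sum_n_m f 1 n.

Definition max1 (f : nat -> R) (n : nat) : R :=
  fold_right Rmax (f 1%nat) (map f (seq 1 n)).

Definition integrand (m l k : nat) (sigma rho b c : nat -> R) (eps : R)
  (lam : R) : C :=
  Cmult (Cmult (cis (lam ^ 2 / 2))
               (cis (eps * sum1 (fun j => b j * sqrt (lam ^ 2 + sigma j)) m)))
        (RtoC (exp (- sum1 (fun i => c i * sqrt (rho i - lam ^ 2)) l)
               * (lam / sqrt (lam ^ 2 + sigma k)))).

(* Main.v *)
Require Import Defs.
From Stdlib Require Import Reals List Lra Lia Classical.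
From Coquelicot Require Import Coquelicot.
Open Scope R_scope.

Lemma cont_pt (f : R -> R) x : continuity_pt f x -> continuous f x.
Proof. intro H. now apply continuity_pt_filterlim. Qed.
Lemma pt_cont (f : R -> R) x : continuous f x -> continuity_pt f x.
Proof. intro H. now apply continuity_pt_filterlim. Qed.

Lemma D_mult (f g : R -> R) (x df dg : R) : is_derive f x df -> is_derive g x dg ->
  is_derive (fun y => f y * g y) x (df * g x + f x * dg).
Proof. intros H1 H2. apply (is_derive_mult f g x df dg H1 H2). intros; apply Rmult_comm. Qed.
Lemma D_plus (f g : R -> R) (x df dg : R) : is_derive f x df -> is_derive g x dg ->
  is_derive (fun y => f y + g y) x (df + dg).
Proof. intros H1 H2. apply (is_derive_plus f g x df dg H1 H2). Qed.
Lemma D_minus (f g : R -> R) (x df dg : R) : is_derive f x df -> is_derive g x dg ->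
  is_derive (fun y => f y - g y) x (df - dg).
Proof. intros H1 H2. apply (is_derive_minus f g x df dg H1 H2). Qed.
Lemma D_comp (g f : R -> R) x dg df : is_derive g (f x) dg -> is_derive f x df ->
  is_derive (fun y => g (f y)) x (dg * df).
Proof. intros H1 H2. replace (dg*df) with (scal df dg).
  - apply (is_derive_comp g f x dg df H1 H2).
  - change (df * dg = dg * df). ring. Qed.
Lemma D_sin (f : R -> R) (x df : R) : is_derive f x df -> is_derive (fun y => sin (f y)) x (cos (f x) * df).
Proof. intros H. apply (D_comp sin f). apply is_derive_sin. auto. Qed.
Lemma D_inv (f : R -> R) (x df : R) : is_derive f x df -> f x <> 0 -> is_derive (fun y => / f y) x (- df / (f x)^2).
Proof. intros; apply is_derive_inv; auto. Qed.
Lemma D_const (c x : R) : is_derive (fun _ : R => c) x 0.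
Proof. apply (@is_derive_const R_AbsRing R_NormedModule c x). Qed.
Lemma D_id (x : R) : is_derive (fun y : R => y) x 1.
Proof. apply (@is_derive_id R_AbsRing x). Qed.
Lemma D_ext (f g : R -> R) (x l l' : R) : (forall t, f t = g t) -> l = l' -> is_derive f x l -> is_derive g x l'.
Proof. intros H1 H2 H3; subst; eapply is_derive_ext; eauto. Qed.
Lemma ex_D (f : R -> R) (x l : R) : is_derive f x l -> continuous f x.
Proof. intros H. apply (@ex_derive_continuous R_AbsRing R_NormedModule). exists l; exact H. Qed.

Lemma C_mult (f g : R -> R) x : continuous f x -> continuous g x -> continuous (fun y => f y * g y) x.
Proof. intros H1 H2; apply cont_pt; apply (continuity_pt_mult f g x); apply pt_cont; auto. Qed.
Lemma C_plus (f g : R -> R) x : continuous f x -> continuous g x -> continuous (fun y => f y + g y) x.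
Proof. intros H1 H2; apply cont_pt; apply (continuity_pt_plus f g x); apply pt_cont; auto. Qed.
Lemma C_minus (f g : R -> R) x : continuous f x -> continuous g x -> continuous (fun y => f y - g y) x.
Proof. intros H1 H2; apply cont_pt; apply (continuity_pt_minus f g x); apply pt_cont; auto. Qed.
Lemma C_inv (f : R -> R) x : continuous f x -> f x <> 0 -> continuous (fun y => / f y) x.
Proof. intros H1 H2; apply cont_pt; apply (continuity_pt_inv f x); auto; apply pt_cont; auto. Qed.
Lemma C_opp (f : R -> R) x : continuous f x -> continuous (fun y => - f y) x.
Proof. intros H1; apply cont_pt; apply (continuity_pt_opp f x); apply pt_cont; auto. Qed.
Lemma C_comp (g f : R -> R) x : continuous f x -> continuous g (f x) -> continuous (fun y => g (f y)) x.
Proof. intros H1 H2. apply (continuous_comp f g x H1 H2). Qed.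
Lemma C_const (c x : R) : continuous (fun _ : R => c) x.
Proof. apply continuous_const. Qed.
Lemma C_id (x : R) : continuous (fun y : R => y) x.
Proof. apply continuous_id. Qed.
Lemma C_sin (f : R -> R) x : continuous f x -> continuous (fun y => sin (f y)) x.
Proof. intros; apply C_comp; auto. apply ex_D with (cos (f x)); apply is_derive_sin. Qed.
Lemma C_cos (f : R -> R) x : continuous f x -> continuous (fun y => cos (f y)) x.
Proof. intros; apply C_comp; auto. apply ex_D with (- sin (f x)); apply is_derive_cos. Qed.

Lemma incr_deriv (f f' : R -> R) a b :
  (forall x, a <= x <= b -> is_derive f x (f' x)) ->
  (forall x, a <= x <= b -> 0 <= f' x) -> a <= b -> f a <= f b.
Proof.
  intros Hd Hp Hab.
  destruct (MVT_gen f a b f') as [c [Hc Heq]].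
  - intros x Hx. rewrite Rmin_left in Hx by lra; rewrite Rmax_right in Hx by lra. apply Hd; lra.
  - intros x Hx. rewrite Rmin_left in Hx by lra; rewrite Rmax_right in Hx by lra.
    apply pt_cont. apply ex_D with (f' x). apply Hd; lra.
  - rewrite Rmin_left in Hc by lra; rewrite Rmax_right in Hc by lra.
    assert (0 <= f' c) by (apply Hp; lra). nra.
Qed.

Lemma split_thr (h h' : R -> R) a b c :
  a <= b ->
  (forall x, a <= x <= b -> is_derive h x (h' x)) ->
  (forall x, a <= x <= b -> 0 <= h' x) ->
  exists t, a <= t <= b /\ (a < t -> forall x, a <= x <= t -> h x <= c) /\
     (t < b -> forall x, t <= x <= b -> c <= h x).
Proof.
  intros Hab Hd Hp.
  assert (Hmono : forall x y, a <= x -> x <= y -> y <= b -> h x <= h y).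
  { intros x y H1 H2 H3. apply (incr_deriv h h'); auto; intros; [apply Hd|apply Hp]; lra. }
  destruct (Rle_dec c (h a)) as [H1|H1].
  { exists a. split; [lra|split]; [intros; lra|]. intros _ x Hx. specialize (Hmono a x). lra. }
  destruct (Rle_dec (h b) c) as [H2|H2].
  { exists b. split; [lra|split]; [|intros; lra]. intros _ x Hx. specialize (Hmono x b). lra. }
  assert (Hab' : a < b) by (destruct (Rle_lt_or_eq_dec a b Hab); auto; subst; lra).
  destruct (Ranalysis5.IVT_interv (fun x => h x - c) a b) as [t [Ht Hteq]].
  - intros y Hy. apply pt_cont. apply C_minus; [|apply C_const]. apply ex_D with (h' y). apply Hd; lra.
  - exact Hab'.
  - lra.
  - lra.
  - exists t. split; [lra|split].
    + intros _ x Hx. specialize (Hmono x t). lra.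
    + intros _ x Hx. specialize (Hmono t x). lra.
Qed.

Lemma decr_deriv (f f' : R -> R) a b :
  (forall x, a <= x <= b -> is_derive f x (f' x)) ->
  (forall x, a <= x <= b -> f' x <= 0) -> a <= b -> f b <= f a.
Proof.
  intros Hd Hp Hab.
  assert (- f a <= - f b); [|lra].
  apply (incr_deriv (fun y => - f y) (fun y => - f' y)); auto.
  - intros x Hx. apply (is_derive_opp f x (f' x)). auto.
  - intros x Hx. specialize (Hp x Hx). lra.
Qed.

Ltac cont := cbv beta; lazymatch goal with
 | |- continuous (fun _ => ?c) ?x => apply (C_const c x)
 | |- continuous (fun y => y) ?x => apply (C_id x)
 | |- continuous (Rmult ?a) ?x => apply (C_mult (fun _ => a) (fun y => y) x); [apply C_const|apply C_id]
 | |- continuous (Rplus ?a) ?x => apply (C_plus (fun _ => a) (fun y => y) x); [apply C_const|apply C_id]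
 | |- continuous (fun y => @?f y + @?g y) ?x => apply (C_plus f g x); cont
 | |- continuous (fun y => @?f y - @?g y) ?x => apply (C_minus f g x); cont
 | |- continuous (fun y => @?f y * @?g y) ?x => apply (C_mult f g x); cont
 | |- continuous (fun y => - @?f y) ?x => apply (C_opp f x); cont
 | |- continuous (fun y => sin (@?f y)) ?x => apply (C_sin f x); cont
 | |- continuous (fun y => cos (@?f y)) ?x => apply (C_cos f x); cont
 | _ => first [assumption | idtac]
 end.

Lemma Rabs_inv_le (y d : R) : 0 < d -> d <= Rabs y -> Rabs (/ y) <= / d.
Proof.
  intros Hd Hy. assert (y <> 0) by (intro; subst; rewrite Rabs_R0 in Hy; lra).
  rewrite Rabs_inv. apply Rinv_le_contravar; auto.
Qed.

Lemma Rabs_sin_le_1 x : Rabs (sin x) <= 1.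
Proof. apply Rabs_le. apply SIN_bound. Qed.
Lemma Rabs_cos_le_1 x : Rabs (cos x) <= 1.
Proof. apply Rabs_le. apply COS_bound. Qed.

Lemma exp_le_exp (x y : R) : x <= y -> exp x <= exp y.
Proof. intros H. destruct (Rle_lt_or_eq_dec x y H). left; apply exp_increasing; auto. right; subst; auto. Qed.

Lemma L1 (A P Pa w W : R) : 0 <= A -> 0 <= w <= W -> 0 <= P <= Pa -> A*P*w <= A*(Pa*W).
Proof. intros. rewrite Rmult_assoc. apply Rmult_le_compat_l; auto. apply Rmult_le_compat; lra. Qed.
Lemma L2 (E q w W : R) : 0 <= E <= 1 -> 0 <= q -> 0 <= w <= W -> E*q*w <= q*W.
Proof. intros. apply Rmult_le_compat; try lra. apply Rmult_le_pos; lra.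
  replace q with (1*q) at 2 by ring. apply Rmult_le_compat_r; lra. Qed.
Lemma L3 (E P Pa h w : R) : 0 <= E <= 1 -> 0 <= P <= Pa -> 0 <= h -> 0 <= w ->
  E*P*h*(w*w) <= Pa*(h*(w*w)).
Proof. intros. assert (0 <= h*(w*w)) by (apply Rmult_le_pos; auto; apply Rmult_le_pos; auto).
  replace (E*P*h*(w*w)) with ((E*P)*(h*(w*w))) by ring. apply Rmult_le_compat_r; auto.
  replace Pa with (1*Pa) by ring. apply Rmult_le_compat; lra. Qed.
Lemma L4 (s k K : R) : 0 <= s <= 1 -> 0 <= k <= K -> s * k <= K.
Proof. intros. replace K with (1*K) by ring. apply Rmult_le_compat; lra. Qed.
Lemma L5 (s E P w Pa W: R) : 0 <= s <= 1 -> 0 <= E <= 1 -> 0 <= P <= Pa -> 0 <= w <= W ->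
  s * (E * P * w) <= Pa * W.
Proof. intros. apply L4; [lra|]. split. repeat apply Rmult_le_pos; lra.
  replace (Pa*W) with (1*Pa*W) by ring. apply Rmult_le_compat; try lra.
  apply Rmult_le_pos; lra. apply Rmult_le_compat; lra. Qed.

Lemma vdc (phi h h' E E' p p' : R -> R) (a b d th : R) :
  a <= b -> 0 < d ->
  (forall x, a <= x <= b -> is_derive phi x (x * h x)) ->
  (forall x, a <= x <= b -> is_derive h x (h' x)) ->
  (forall x, a <= x <= b -> is_derive E x (E' x)) ->
  (forall x, a <= x <= b -> is_derive p x (p' x)) ->
  (forall x, a <= x <= b -> continuous h' x /\ continuous E' x /\ continuous p' x) ->
  (forall x, a <= x <= b -> 0 <= h' x /\ 0 <= E' x /\ p' x <= 0 /\ 0 <= E x <= 1 /\ 0 < p x) ->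
  ((forall x, a <= x <= b -> d <= h x) \/ (forall x, a <= x <= b -> h x <= - d)) ->
  ex_RInt (fun x => cos (phi x + th) * (x * (E x * p x))) a b /\
  Rabs (RInt (fun x => cos (phi x + th) * (x * (E x * p x))) a b) <= 5 * p a / d.
Proof.
  intros Hab Hd Dphi Dh DE Dp Cd Sg Hsg.
  assert (Hh : forall x, a <= x <= b -> d <= Rabs (h x) /\ h x <> 0).
  { intros x Hx; destruct Hsg as [H|H]; specialize (H x Hx);
      unfold Rabs; destruct (Rcase_abs (h x)); split; lra. }
  assert (Cphi : forall x, a <= x <= b -> continuous phi x) by (intros; eapply ex_D; eauto).
  assert (Ch : forall x, a <= x <= b -> continuous h x) by (intros; eapply ex_D; eauto).
  assert (CE : forall x, a <= x <= b -> continuous E x) by (intros; eapply ex_D; eauto).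
  assert (Cp : forall x, a <= x <= b -> continuous p x) by (intros; eapply ex_D; eauto).
  assert (Pm : forall x, a <= x <= b -> p x <= p a).
  { intros x Hx. apply (decr_deriv p p'). intros; apply Dp; lra. intros; apply Sg; lra. lra. }
  set (g := fun x => cos (phi x + th) * (x * (E x * p x))).
  set (k := fun x => E' x * p x * / h x + E x * p' x * / h x - E x * p x * h' x * / (h x * h x)).
  set (F := fun x => sin (phi x + th) * (E x * p x * / h x)).
  assert (Cg : forall x, a <= x <= b -> continuous g x).
  { intros x Hx. unfold g. destruct (Cd x Hx) as [? [? ?]]. specialize (Cphi x Hx). specialize (CE x Hx). specialize (Cp x Hx). cont. }
  assert (Ck : forall x, a <= x <= b -> continuous (fun y => sin (phi y + th) * k y) x).
  { intros x Hx. unfold k. destruct (Cd x Hx) as [? [? ?]]. specialize (Cphi x Hx). specialize (CE x Hx). specialize (Cp x Hx).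
    assert (continuous (fun y => / h y) x) by (apply C_inv; [apply Ch; auto| apply Hh; auto]).
    assert (continuous (fun y => / (h y * h y)) x).
    { apply C_inv; [apply C_mult; apply Ch; auto| ]. destruct (Hh x Hx). apply Rmult_integral_contrapositive; auto. }
    specialize (Ch x Hx). cont. }
  assert (DF : forall x, a <= x <= b -> is_derive F x (g x + sin (phi x + th) * k x)).
  { intros x Hx. destruct (Hh x Hx) as [_ Hnz]. unfold F, g, k.
    eapply D_ext; [intro t; reflexivity| |].
    2:{ apply D_mult. apply D_sin. apply D_plus. apply Dphi; auto. apply D_const.
        apply D_mult. apply D_mult. apply DE; auto. apply Dp; auto. apply D_inv; [apply Dh; auto|auto]. }
    simpl. field; repeat split; auto; lra. }
  assert (IF : is_RInt (fun x => g x + sin (phi x + th) * k x) a b (F b - F a)).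
  { apply (is_RInt_derive F (fun x => g x + sin (phi x + th) * k x)).
    - intros x Hx. rewrite Rmin_left in Hx by lra; rewrite Rmax_right in Hx by lra. apply DF; auto.
    - intros x Hx. rewrite Rmin_left in Hx by lra; rewrite Rmax_right in Hx by lra. apply C_plus; [apply Cg|apply Ck]; auto. }
  assert (Eg : ex_RInt g a b).
  { apply (@ex_RInt_continuous R_CompleteNormedModule). intros z Hz. rewrite Rmin_left in Hz by lra; rewrite Rmax_right in Hz by lra. auto. }
  assert (Ek : ex_RInt (fun y => sin (phi y + th) * k y) a b).
  { apply (@ex_RInt_continuous R_CompleteNormedModule). intros z Hz. rewrite Rmin_left in Hz by lra; rewrite Rmax_right in Hz by lra. auto. }
  assert (Heq : RInt g a b = (F b - F a) - RInt (fun y => sin (phi y + th) * k y) a b).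
  { rewrite <- (is_RInt_unique _ _ _ _ IF).
    assert (RInt (fun x => g x + sin (phi x + th) * k x) a b = RInt g a b + RInt (fun y => sin (phi y + th) * k y) a b)
      by (apply (RInt_plus g (fun y => sin (phi y + th) * k y) a b Eg Ek)).
    rewrite H. apply (fun (u v : R) => eq_sym (Rplus_minus_r u v)). }
  split; [exact Eg|]. fold g. rewrite Heq.
  set (K0 := fun x => E x * (p a * / d) - p x * / d - p a * / h x).
  set (K := fun x => E' x * (p a * / d) - p' x * / d + p a * (h' x * / (h x * h x))).
  assert (IK : is_RInt K a b (K0 b - K0 a)).
  { apply (is_RInt_derive K0 K).
    - intros x Hx. rewrite Rmin_left in Hx by lra; rewrite Rmax_right in Hx by lra.
      destruct (Hh x Hx) as [_ Hnz]. unfold K0, K.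
      eapply D_ext; [intro t; reflexivity| |].
      2:{ apply D_minus. apply D_minus. apply D_mult. apply DE; auto. apply D_const.
          apply D_mult. apply Dp; auto. apply D_const.
          apply D_mult. apply D_const. apply D_inv; [apply Dh; auto|auto]. }
      simpl. field; repeat split; auto; lra.
    - intros x Hx. rewrite Rmin_left in Hx by lra; rewrite Rmax_right in Hx by lra.
      unfold K. destruct (Cd x Hx) as [? [? ?]].
      assert (continuous (fun y => / (h y * h y)) x).
      { apply C_inv; [apply C_mult; apply Ch; auto| ]. destruct (Hh x Hx). apply Rmult_integral_contrapositive; auto. }
      cont. }
  assert (Bk : Rabs (RInt (fun y => sin (phi y + th) * k y) a b) <= K0 b - K0 a).
  { apply (norm_RInt_le (fun y => sin (phi y + th) * k y) K a b); auto.
    2: apply (@RInt_correct R_CompleteNormedModule); auto.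
    intros x Hx. change (norm (sin (phi x + th) * k x)) with (Rabs (sin (phi x + th) * k x)).
    destruct (Hh x Hx) as [Hhd Hnz]. destruct (Sg x Hx) as [G1 [G2 [G3 [G4 G5]]]].
    specialize (Pm x Hx).
    assert (Hw : Rabs (/ h x) <= / d) by (apply Rabs_inv_le; auto).
    assert (Hw0 : 0 <= Rabs (/ h x)) by apply Rabs_pos.
    assert (Hww : / (h x * h x) = Rabs (/ h x) * Rabs (/ h x)).
    { rewrite <- Rabs_mult, <- Rinv_mult. rewrite Rabs_pos_eq; [reflexivity|].
      apply Rlt_le, Rinv_0_lt_compat. apply (Rsqr_pos_lt (h x)); auto. }
    rewrite Rabs_mult.
    assert (Rabs (sin (phi x + th)) <= 1) by apply Rabs_sin_le_1.
    assert (Rabs (k x) <= K x); [|apply L4; split; auto; apply Rabs_pos].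
    unfold k, K. rewrite Hww.
    eapply Rle_trans. apply Rabs_triang. eapply Rle_trans. apply Rplus_le_compat_r. apply Rabs_triang.
    rewrite Rabs_Ropp. repeat rewrite Rabs_mult.
    repeat rewrite (Rabs_pos_eq (E x)) by lra. repeat rewrite (Rabs_pos_eq (E' x)) by lra.
    repeat rewrite (Rabs_pos_eq (p x)) by lra. repeat rewrite (Rabs_pos_eq (h' x)) by lra.
    rewrite (Rabs_left1 (p' x)) by lra.
    repeat rewrite Rabs_Rabsu.
    set (w := Rabs (/ h x)) in *.
    assert (E' x * p x * w <= E' x * (p a * / d)) by (apply L1; lra).
    assert (E x * - p' x * w <= - p' x * / d) by (apply L2; lra).
    assert (E x * p x * h' x * (w * w) <= p a * (h' x * (w * w))) by (apply L3; lra).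
    replace (Rabs w) with w by (symmetry; apply Rabs_pos_eq; unfold w; apply Rabs_pos).
    unfold Rminus. lra. }
  assert (BF : forall x, a <= x <= b -> Rabs (F x) <= p a / d).
  { intros x Hx. unfold F. destruct (Hh x Hx) as [Hhd Hnz]. destruct (Sg x Hx) as [G1 [G2 [G3 [G4 G5]]]].
    specialize (Pm x Hx).
    assert (Hw : Rabs (/ h x) <= / d) by (apply Rabs_inv_le; auto).
    assert (Hw0 : 0 <= Rabs (/ h x)) by apply Rabs_pos.
    assert (Rabs (sin (phi x + th)) <= 1) by apply Rabs_sin_le_1.
    repeat rewrite Rabs_mult. rewrite (Rabs_pos_eq (E x)) by lra. rewrite (Rabs_pos_eq (p x)) by lra.
    unfold Rdiv. apply L5; try lra. split; [apply Rabs_pos|lra]. }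
  assert (BK : K0 b - K0 a <= 3 * (p a / d)).
  { unfold K0. destruct (Sg a (conj (Rle_refl a) Hab)) as [A1 [A2 [A3 [A4 A5]]]].
    destruct (Sg b (conj Hab (Rle_refl b))) as [B1 [B2 [B3 [B4 B5]]]].
    assert (/ h a - / h b <= / d).
    { destruct Hsg as [H|H].
      - assert (d <= h a) by (apply H; lra). assert (d <= h b) by (apply H; lra).
        assert (/ h a <= / d) by (apply Rinv_le_contravar; lra).
        assert (0 < / h b) by (apply Rinv_0_lt_compat; lra). lra.
      - assert (h a <= - d) by (apply H; lra). assert (h b <= - d) by (apply H; lra).
        assert (/ h a < 0) by (apply Rinv_lt_0_compat; lra).
        assert (/ (- h b) <= / d) by (apply Rinv_le_contravar; lra).
        rewrite Rinv_opp in H3. lra. }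
    assert (0 < / d) by (apply Rinv_0_lt_compat; lra).
    assert ((E b - E a) * (p a * / d) <= 1 * (p a * / d)).
    { apply Rmult_le_compat_r; [apply Rmult_le_pos; lra|lra]. }
    assert (p a * (/ h a - / h b) <= p a * / d) by (apply Rmult_le_compat_l; lra).
    assert (0 <= p b * / d) by (apply Rmult_le_pos; lra).
    unfold Rdiv. lra. }
  assert (Ba := BF a (conj (Rle_refl a) Hab)). assert (Bb := BF b (conj Hab (Rle_refl b))).
  unfold Rminus at 1. eapply Rle_trans. apply Rabs_triang. rewrite Rabs_Ropp.
  assert (Rabs (F b - F a) <= 2 * (p a / d)).
  { unfold Rminus. eapply Rle_trans. apply Rabs_triang. rewrite Rabs_Ropp. lra. }
  unfold Rdiv in *. lra.
Qed.

Lemma RInt_triv (f : R -> R) a b : a <= b -> ex_RInt f a b ->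
  (forall x, a <= x <= b -> Rabs (f x) <= 1) -> Rabs (RInt f a b) <= b - a.
Proof.
  intros Hab Ex Hb.
  assert (H := norm_RInt_le f (fun _ => 1) a b (RInt f a b) (scal (b - a) 1) Hab Hb (RInt_correct f a b Ex) (is_RInt_const a b 1)).
  change (norm (RInt f a b)) with (Rabs (RInt f a b)) in H.
  change (scal (b - a) 1) with ((b - a) * 1) in H. lra.
Qed.

Lemma RInt_wt (f : R -> R) a b P : 0 <= a <= b -> ex_RInt f a b ->
  (forall x, a <= x <= b -> Rabs (f x) <= P * x) -> Rabs (RInt f a b) <= P * (b*b - a*a) / 2.
Proof.
  intros Hab Ex Hb.
  assert (I : is_RInt (fun x => P * x) a b (P * b * b / 2 - P * a * a / 2)).
  { apply (is_RInt_derive (fun x => P * x * x / 2) (fun x => P * x)).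
    - intros x _. eapply D_ext; [intro t; reflexivity| |].
      2:{ apply D_mult. apply D_mult. apply D_mult. apply D_const. apply D_id. apply D_id. apply D_const. }
      simpl. field.
    - intros x _. apply C_mult; [apply C_const|apply C_id]. }
  assert (H := norm_RInt_le f (fun x => P * x) a b (RInt f a b) _ (proj2 Hab) Hb (RInt_correct f a b Ex) I).
  change (norm (RInt f a b)) with (Rabs (RInt f a b)) in H.
  eapply Rle_trans; [exact H|]. right; field.
Qed.

Lemma deg (f : R -> R) a t B : a <= t -> 0 <= B -> (a < t -> Rabs (RInt f a t) <= B) -> Rabs (RInt f a t) <= B.
Proof.
  intros H1 H2 H3. destruct (Rle_lt_or_eq_dec a t H1) as [H|H]; auto.
  subst. rewrite RInt_point. change (Rabs 0 <= B). rewrite Rabs_R0. auto.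
Qed.

Lemma chasles (f : R -> R) a b c : a <= b <= c -> ex_RInt f a c ->
  RInt f a c = RInt f a b + RInt f b c.
Proof.
  intros H Ex. rewrite <- (RInt_Chasles f a b c).
  - reflexivity.
  - apply ex_RInt_Chasles_1 with c; auto.
  - apply ex_RInt_Chasles_2 with a; auto.
Qed.

Definition Hyps (phi hv hv' E E' p p' : R -> R) (s tau pi kap x : R) : Prop :=
  is_derive phi x (x * hv x) /\ is_derive hv x (hv' x) /\ is_derive E x (E' x) /\
  is_derive p x (p' x) /\ continuous hv' x /\ continuous E' x /\ continuous p' x /\
  0 <= hv' x /\ 0 <= E' x /\ p' x <= 0 /\ 0 <= E x <= 1 /\ 0 < p x /\ x * p x <= 1 /\
  (s <= x -> p x <= / tau) /\ (s <= x -> -1/2 <= hv x -> p x <= pi) /\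
  (hv x <= 1/2 -> kap * x <= hv' x).

Lemma vdc_H (phi hv hv' E E' p p' : R -> R) (s tau pi kap a b d th : R) :
  (forall x, a <= x <= b -> Hyps phi hv hv' E E' p p' s tau pi kap x) ->
  a <= b -> 0 < d ->
  ((forall x, a <= x <= b -> d <= hv x) \/ (forall x, a <= x <= b -> hv x <= - d)) ->
  Rabs (RInt (fun x => cos (phi x + th) * (x * (E x * p x))) a b) <= 5 * p a / d.
Proof.
  intros H Hab Hd Hs.
  apply (vdc phi hv hv' E E' p p' a b d th Hab Hd); auto; intros x Hx;
   destruct (H x Hx) as [? [? [? [? [? [? [? [? [? [? [? [? ?]]]]]]]]]]]]; auto.
Qed.

Lemma f_ex (phi hv hv' E E' p p' : R -> R) (s tau pi kap a b th : R) :
  (forall x, a <= x <= b -> Hyps phi hv hv' E E' p p' s tau pi kap x) ->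
  a <= b -> ex_RInt (fun x => cos (phi x + th) * (x * (E x * p x))) a b.
Proof.
  intros H Hab. apply (@ex_RInt_continuous R_CompleteNormedModule). intros z Hz.
  rewrite Rmin_left in Hz by lra; rewrite Rmax_right in Hz by lra.
  destruct (H z Hz) as [D1 [D2 [D3 [D4 _]]]].
  apply ex_D in D1. apply ex_D in D3. apply ex_D in D4. cont.
Qed.

Lemma f_bnd (phi hv hv' E E' p p' : R -> R) (s tau pi kap a b th : R) :
  (forall x, a <= x <= b -> Hyps phi hv hv' E E' p p' s tau pi kap x) -> 0 < a ->
  forall x, a <= x <= b -> Rabs (cos (phi x + th) * (x * (E x * p x))) <= 1 /\
     (forall P, p x <= P -> Rabs (cos (phi x + th) * (x * (E x * p x))) <= P * x).
Proof.
  intros H Ha x Hx. destruct (H x Hx) as [_ [_ [_ [_ [_ [_ [_ [_ [_ [_ [HE [Hp [Hxp _]]]]]]]]]]]]].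
  assert (Rabs (cos (phi x + th)) <= 1) by apply Rabs_cos_le_1.
  assert (0 <= Rabs (cos (phi x + th))) by apply Rabs_pos.
  rewrite Rabs_mult. rewrite (Rabs_pos_eq (x * (E x * p x))).
  2:{ apply Rmult_le_pos; [lra|]. apply Rmult_le_pos; lra. }
  split.
  - apply L4; split; auto. apply Rmult_le_pos; [lra|apply Rmult_le_pos; lra].
    replace (x * (E x * p x)) with (E x * (x * p x)) by ring.
    replace 1 with (1 * 1) by ring. apply Rmult_le_compat; try lra. apply Rmult_le_pos; lra.
  - intros P HP. apply L4; split; auto. apply Rmult_le_pos; [lra|apply Rmult_le_pos; lra].
    replace (P * x) with (x * (1 * P)) by ring. apply Rmult_le_compat_l; [lra|].
    apply Rmult_le_compat; lra.
Qed.

Lemma decomp (phi hv hv' E E' p p' : R -> R) (s tau pi kap a b d th : R) :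
  (forall x, a <= x <= b -> Hyps phi hv hv' E E' p p' s tau pi kap x) ->
  0 < a <= b -> 0 <= s <= tau -> 0 < d <= 1/2 -> 0 < kap -> 0 <= pi -> 0 < tau ->
  Rabs (RInt (fun x => cos (phi x + th) * (x * (E x * p x))) a b)
    <= tau + 10 / tau + 10 * pi / d + 2 * pi * d / kap.
Proof.
  intros H Hab Hs Hd Hk Hpi Htau.
  set (f := fun x => cos (phi x + th) * (x * (E x * p x))).
  assert (Ex : forall u v, a <= u <= v -> v <= b -> ex_RInt f u v).
  { intros u v Huv Hvb. apply (f_ex phi hv hv' E E' p p' s tau pi kap u v th); [|lra].
    intros; apply H; lra. }
  assert (Fb := f_bnd phi hv hv' E E' p p' s tau pi kap a b th H (proj1 Hab)).
  assert (Hmono : forall u v, a <= u -> u <= v -> v <= b -> hv u <= hv v).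
  { intros u v H1 H2 H3. apply (incr_deriv hv hv'); auto; intros x Hx; destruct (H x ltac:(lra)) as [_ [? [_ [_ [_ [_ [_ [? _]]]]]]]]; auto. }
  assert (Pmono : forall u v, a <= u -> u <= v -> v <= b -> p v <= p u).
  { intros u v H1 H2 H3. apply (decr_deriv p p'); auto; intros x Hx; destruct (H x ltac:(lra)) as [_ [_ [_ [? [_ [_ [_ [_ [_ [? _]]]]]]]]]]; auto. }
  set (c := Rmax a (Rmin s b)).
  assert (Hc : a <= c <= b) by (unfold c; split; [apply Rmax_l| apply Rmax_lub; [lra|apply Rmin_r]]).
  assert (Hca : c - a <= tau).
  { unfold c. destruct (Rle_dec a (Rmin s b)).
    - rewrite Rmax_right by auto. assert (Rmin s b <= s) by apply Rmin_l. lra.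
    - rewrite Rmax_left by lra. lra. }
  rewrite (chasles f a c b) by (auto; apply Ex; lra).
  eapply Rle_trans; [apply Rabs_triang|].
  assert (B1 : Rabs (RInt f a c) <= tau).
  { eapply Rle_trans; [apply RInt_triv|]; [lra|apply Ex; lra| |lra]. intros; apply Fb; lra. }
  assert (0 <= 10 / tau) by (apply Rmult_le_pos; [lra|apply Rlt_le, Rinv_0_lt_compat; lra]).
  assert (0 <= 10 * pi / d) by (apply Rmult_le_pos; [lra|apply Rlt_le, Rinv_0_lt_compat; lra]).
  assert (0 <= 2 * pi * d / kap) by (apply Rmult_le_pos; [nra|apply Rlt_le, Rinv_0_lt_compat; lra]).
  cut (Rabs (RInt f c b) <= 10 / tau + 10 * pi / d + 2 * pi * d / kap); [lra|].
  apply deg; [lra|lra|]. intros Hcb.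
  assert (Hsc : s <= c).
  { unfold c in *. destruct (Rle_dec s b).
    - rewrite Rmin_left in * by auto. apply Rmax_r.
    - rewrite Rmin_right in * by lra. rewrite Rmax_right in Hcb by lra. lra. }
  assert (Dh : forall x, c <= x <= b -> is_derive hv x (hv' x)) by (intros x Hx; apply H; lra).
  assert (Dh' : forall x, c <= x <= b -> 0 <= hv' x) by (intros x Hx; apply H; lra).
  destruct (split_thr hv hv' c b (-1/2) ltac:(lra) Dh Dh') as [t1 [Ht1 [L1' R1']]].
  assert (Dh2 : forall x, t1 <= x <= b -> is_derive hv x (hv' x)) by (intros x Hx; apply H; lra).
  assert (Dh2' : forall x, t1 <= x <= b -> 0 <= hv' x) by (intros x Hx; apply H; lra).
  destruct (split_thr hv hv' t1 b (-d) ltac:(lra) Dh2 Dh2') as [t2 [Ht2 [L2' R2']]].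
  assert (Dh3 : forall x, t2 <= x <= b -> is_derive hv x (hv' x)) by (intros x Hx; apply H; lra).
  assert (Dh3' : forall x, t2 <= x <= b -> 0 <= hv' x) by (intros x Hx; apply H; lra).
  destruct (split_thr hv hv' t2 b d ltac:(lra) Dh3 Dh3') as [t3 [Ht3 [L3' R3']]].
  rewrite (chasles f c t1 b) by (auto; apply Ex; lra).
  rewrite (chasles f t1 t2 b) by (auto; apply Ex; lra).
  rewrite (chasles f t2 t3 b) by (auto; apply Ex; lra).
  assert (P1 : Rabs (RInt f c t1) <= 10 / tau).
  { apply deg; [lra|lra|]. intros Hct.
    eapply Rle_trans. apply (vdc_H phi hv hv' E E' p p' s tau pi kap c t1 (1/2) th).
    intros; apply H; lra. lra. lra. right. intros x Hx. assert (hv x <= -1/2) by (apply L1'; auto). lra.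
    destruct (H c ltac:(lra)) as [_ [_ [_ [_ [_ [_ [_ [_ [_ [_ [_ [_ [_ [Ht _]]]]]]]]]]]]]].
    specialize (Ht Hsc). unfold Rdiv. lra. }
  assert (P2 : Rabs (RInt f t1 t2) <= 5 * pi / d).
  { apply deg; [lra|apply Rmult_le_pos; [lra|apply Rlt_le, Rinv_0_lt_compat; lra]|]. intros Ht12.
    eapply Rle_trans. apply (vdc_H phi hv hv' E E' p p' s tau pi kap t1 t2 d th).
    intros; apply H; lra. lra. lra. right. intros x Hx. apply L2'; auto.
    destruct (H t1 ltac:(lra)) as [_ [_ [_ [_ [_ [_ [_ [_ [_ [_ [_ [_ [_ [_ [Ht _]]]]]]]]]]]]]]].
    assert (p t1 <= pi) by (apply Ht; [lra| apply R1'; lra]).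
    unfold Rdiv. apply Rmult_le_compat_r; [apply Rlt_le, Rinv_0_lt_compat; lra|lra]. }
  assert (P3 : Rabs (RInt f t2 t3) <= 2 * pi * d / kap).
  { apply deg; [lra|auto|]. intros Ht23.
    assert (Hv : forall x, t2 <= x <= t3 -> - d <= hv x <= d).
    { intros x Hx. split; [apply R2'; lra|apply L3'; lra]. }
    eapply Rle_trans. apply (RInt_wt f t2 t3 pi); [lra|apply Ex; lra|].
    { intros x Hx. apply Fb; [lra|]. destruct (H x ltac:(lra)) as [_ [_ [_ [_ [_ [_ [_ [_ [_ [_ [_ [_ [_ [_ [Ht _]]]]]]]]]]]]]]].
      apply Ht; [lra|]. specialize (Hv x Hx). lra. }
    assert (Hpsi : hv t2 - kap * (t2 * t2) / 2 <= hv t3 - kap * (t3 * t3) / 2).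
    { apply (incr_deriv (fun x => hv x - kap * (x * x) / 2) (fun x => hv' x - kap * x)); [| |lra].
      - intros x Hx. eapply D_ext; [intro; reflexivity| |].
        2:{ apply D_minus. apply H; lra. apply D_mult. apply D_mult. apply D_const.
            apply D_mult; apply D_id. apply D_const. }
        simpl. field.
      - intros x Hx. destruct (H x ltac:(lra)) as [_ [_ [_ [_ [_ [_ [_ [_ [_ [_ [_ [_ [_ [_ [_ Hk']]]]]]]]]]]]]]].
        assert (kap * x <= hv' x) by (apply Hk'; specialize (Hv x Hx); lra). lra. }
    assert (Hv2 := Hv t2 ltac:(lra)). assert (Hv3 := Hv t3 ltac:(lra)).
    assert (kap * (t3 * t3 - t2 * t2) <= 4 * d) by lra.
    assert (t3 * t3 - t2 * t2 <= 4 * d / kap).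
    { apply (Rmult_le_reg_l kap); auto. unfold Rdiv. field_simplify; lra. }
    unfold Rdiv in *. 
    replace (2 * pi * d * / kap) with (pi * (4 * d * / kap) / 2) by (field; lra).
    unfold Rdiv. apply Rmult_le_compat_r; [lra|]. apply Rmult_le_compat_l; lra. }
  assert (P4 : Rabs (RInt f t3 b) <= 5 * pi / d).
  { apply deg; [lra|apply Rmult_le_pos; [lra|apply Rlt_le, Rinv_0_lt_compat; lra]|]. intros Ht3b.
    eapply Rle_trans. apply (vdc_H phi hv hv' E E' p p' s tau pi kap t3 b d th).
    intros; apply H; lra. lra. lra. left. intros x Hx. apply R3'; auto.
    destruct (H t3 ltac:(lra)) as [_ [_ [_ [_ [_ [_ [_ [_ [_ [_ [_ [_ [_ [_ [Ht _]]]]]]]]]]]]]]].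
    assert (p t3 <= pi) by (apply Ht; [lra| assert (d <= hv t3) by (apply R3'; lra); lra]).
    unfold Rdiv. apply Rmult_le_compat_r; [apply Rlt_le, Rinv_0_lt_compat; lra|lra]. }
  assert (Rabs (RInt f c t1 + (RInt f t1 t2 + (RInt f t2 t3 + RInt f t3 b))) <=
     Rabs (RInt f c t1) + (Rabs (RInt f t1 t2) + (Rabs (RInt f t2 t3) + Rabs (RInt f t3 b)))).
  { eapply Rle_trans; [apply Rabs_triang|]. apply Rplus_le_compat_l.
    eapply Rle_trans; [apply Rabs_triang|]. apply Rplus_le_compat_l. apply Rabs_triang. }
  unfold Rdiv in *. lra.
Qed.

Lemma decomp_plus (phi hv hv' E E' p p' : R -> R) (s tau pi kap a b th : R) :
  (forall x, a <= x <= b -> Hyps phi hv hv' E E' p p' s tau pi kap x) ->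
  (forall x, a <= x <= b -> hv x <= -1) ->
  0 < a <= b -> 0 <= s <= tau -> 0 < tau ->
  Rabs (RInt (fun x => cos (phi x + th) * (x * (E x * p x))) a b) <= tau + 5 / tau.
Proof.
  intros H Hneg Hab Hs Htau.
  set (f := fun x => cos (phi x + th) * (x * (E x * p x))).
  assert (Ex : forall u v, a <= u <= v -> v <= b -> ex_RInt f u v).
  { intros u v Huv Hvb. apply (f_ex phi hv hv' E E' p p' s tau pi kap u v th); [|lra].
    intros; apply H; lra. }
  assert (Fb := f_bnd phi hv hv' E E' p p' s tau pi kap a b th H (proj1 Hab)).
  set (c := Rmax a (Rmin s b)).
  assert (Hc : a <= c <= b) by (unfold c; split; [apply Rmax_l| apply Rmax_lub; [lra|apply Rmin_r]]).
  assert (Hca : c - a <= tau).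
  { unfold c. destruct (Rle_dec a (Rmin s b)).
    - rewrite Rmax_right by auto. assert (Rmin s b <= s) by apply Rmin_l. lra.
    - rewrite Rmax_left by lra. lra. }
  rewrite (chasles f a c b) by (auto; apply Ex; lra).
  eapply Rle_trans; [apply Rabs_triang|].
  assert (B1 : Rabs (RInt f a c) <= tau).
  { eapply Rle_trans; [apply RInt_triv|]; [lra|apply Ex; lra| |lra]. intros; apply Fb; lra. }
  assert (0 <= 5 / tau) by (apply Rmult_le_pos; [lra|apply Rlt_le, Rinv_0_lt_compat; lra]).
  cut (Rabs (RInt f c b) <= 5 / tau); [lra|].
  apply deg; [lra|lra|]. intros Hcb.
  assert (Hsc : s <= c).
  { unfold c in *. destruct (Rle_dec s b).
    - rewrite Rmin_left in * by auto. apply Rmax_r.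
    - rewrite Rmin_right in * by lra. rewrite Rmax_right in Hcb by lra. lra. }
  eapply Rle_trans. apply (vdc_H phi hv hv' E E' p p' s tau pi kap c b 1 th).
  intros; apply H; lra. lra. lra. right. intros x Hx. apply Hneg; lra.
  destruct (H c ltac:(lra)) as [_ [_ [_ [_ [_ [_ [_ [_ [_ [_ [_ [_ [_ [Ht _]]]]]]]]]]]]]].
  specialize (Ht Hsc). unfold Rdiv. lra.
Qed.

Lemma sum0 (f : nat -> R) : sum_n_m f 1 0 = 0.
Proof. rewrite sum_n_m_zero by lia. reflexivity. Qed.
Lemma sumS (f : nat -> R) m : sum_n_m f 1 (S m) = sum_n_m f 1 m + f (S m).
Proof. rewrite sum_n_Sm by lia. reflexivity. Qed.

Lemma D_sum (F : nat -> R -> R) (F' : nat -> R) m x :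
  (forall j, (1 <= j <= m)%nat -> is_derive (F j) x (F' j)) ->
  is_derive (fun y => sum_n_m (fun j => F j y) 1 m) x (sum_n_m F' 1 m).
Proof.
  induction m; intros H.
  - apply (D_ext (fun _ => 0) _ x 0 _). intro t; rewrite sum0; reflexivity.
    rewrite sum0; reflexivity. apply D_const.
  - apply (D_ext (fun y => sum_n_m (fun j => F j y) 1 m + F (S m) y) _ x
      (sum_n_m F' 1 m + F' (S m)) _).
    intro t; rewrite sumS; reflexivity. rewrite sumS; reflexivity.
    apply D_plus. apply IHm. intros; apply H; lia. apply H; lia.
Qed.

Lemma C_sum (F : nat -> R -> R) m x :
  (forall j, (1 <= j <= m)%nat -> continuous (F j) x) ->
  continuous (fun y => sum_n_m (fun j => F j y) 1 m) x.
Proof.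
  induction m; intros H.
  - apply (continuous_ext (fun _ => 0)). intro t; rewrite sum0; reflexivity. apply C_const.
  - apply (continuous_ext (fun y => sum_n_m (fun j => F j y) 1 m + F (S m) y)).
    intro t; rewrite sumS; reflexivity.
    apply C_plus. apply IHm. intros; apply H; lia. apply H; lia.
Qed.

Lemma sum_le (f g : nat -> R) m : (forall j, (1 <= j <= m)%nat -> f j <= g j) ->
  sum_n_m f 1 m <= sum_n_m g 1 m.
Proof.
  induction m; intros H. rewrite !sum0; lra.
  rewrite !sumS. assert (f (S m) <= g (S m)) by (apply H; lia).
  assert (sum_n_m f 1 m <= sum_n_m g 1 m) by (apply IHm; intros; apply H; lia). lra.
Qed.

Lemma sum_nonneg (f : nat -> R) m : (forall j, (1 <= j <= m)%nat -> 0 <= f j) -> 0 <= sum_n_m f 1 m.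
Proof.
  intros H. assert (sum_n_m (fun _ => 0) 1 m <= sum_n_m f 1 m) by (apply sum_le; auto).
  assert (sum_n_m (fun _ : nat => 0) 1 m = 0).
  { clear. induction m. apply sum0. rewrite sumS, IHm. apply Rplus_0_r. }
  lra.
Qed.

Lemma sum_term (f : nat -> R) m k : (forall j, (1 <= j <= m)%nat -> 0 <= f j) -> (1 <= k <= m)%nat ->
  f k <= sum_n_m f 1 m.
Proof.
  induction m; intros H Hk. lia.
  rewrite sumS. destruct (Nat.eq_dec k (S m)).
  - subst. assert (0 <= sum_n_m f 1 m) by (apply sum_nonneg; intros; apply H; lia). lra.
  - assert (f k <= sum_n_m f 1 m) by (apply IHm; [intros; apply H; lia|lia]).
    assert (0 <= f (S m)) by (apply H; lia). lra.
Qed.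

Lemma sum_pigeon (f : nat -> R) m v : (1 <= m)%nat -> v <= sum_n_m f 1 m ->
  exists j, (1 <= j <= m)%nat /\ v / INR m <= f j.
Proof.
  intros Hm Hv.
  destruct (classic (exists j, (1 <= j <= m)%nat /\ v / INR m <= f j)) as [E|E]; auto.
  exfalso.
  assert (Hl : forall j, (1 <= j <= m)%nat -> f j <= v / INR m).
  { intros j Hj. destruct (Rle_dec (f j) (v / INR m)); auto. exfalso; apply E; exists j; split; auto; lra. }
  assert (Hlt : forall j, (1 <= j <= m)%nat -> f j < v / INR m).
  { intros j Hj. destruct (Rle_lt_or_eq_dec _ _ (Hl j Hj)); auto. exfalso; apply E; exists j; split; auto; lra. }
  assert (Hs : forall n, (1 <= n <= m)%nat -> sum_n_m f 1 n < INR n * (v / INR m)).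
  { induction n; intros Hn. lia.
    rewrite sumS. destruct (Nat.eq_dec n 0).
    - subst. rewrite sum0. simpl. assert (f 1%nat < v / INR m) by (apply Hlt; lia). lra.
    - assert (sum_n_m f 1 n < INR n * (v / INR m)) by (apply IHn; lia).
      assert (f (S n) < v / INR m) by (apply Hlt; lia). rewrite S_INR. lra. }
  specialize (Hs m ltac:(lia)).
  assert (INR m <> 0) by (apply not_0_INR; lia).
  replace (INR m * (v / INR m)) with v in Hs by (field; auto). lra.
Qed.

Definition uu (s x : R) := sqrt (x ^ 2 + s).
Definition Sf (m : nat) (b sig : nat -> R) (x : R) := sum_n_m (fun j => b j * / uu (sig j) x) 1 m.
Definition S3f (m : nat) (b sig : nat -> R) (x : R) :=
  sum_n_m (fun j => b j * / (uu (sig j) x * uu (sig j) x * uu (sig j) x)) 1 m.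
Definition Phif (eps : R) (m : nat) (b sig : nat -> R) (x : R) :=
  x ^ 2 / 2 + eps * sum1 (fun j => b j * sqrt (x ^ 2 + sig j)) m.
Definition Ef (l : nat) (c rho : nat -> R) (x : R) :=
  exp (- sum1 (fun i => c i * sqrt (rho i - x ^ 2)) l).
Definition Ef' (l : nat) (c rho : nat -> R) (x : R) :=
  Ef l c rho x * sum_n_m (fun i => c i * x * / sqrt (rho i - x ^ 2)) 1 l.
Definition pf (sk x : R) := / uu sk x.
Definition pf' (sk x : R) := - x * / (uu sk x * uu sk x * uu sk x).

Lemma uu_pos s x : 0 < x ^ 2 + s -> 0 < uu s x.
Proof. intros; unfold uu; apply sqrt_lt_R0; auto. Qed.

Lemma D_sq x : is_derive (fun y => y ^ 2) x (2 * x).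
Proof.
  apply (D_ext (fun y => y * y) _ x (1 * x + x * 1) _). intro; ring. ring.
  apply D_mult; apply D_id.
Qed.

Lemma D_uu s x : 0 < x ^ 2 + s -> is_derive (uu s) x (x * / uu s x).
Proof.
  intros H. unfold uu.
  apply (D_ext (fun y => sqrt (y ^ 2 + s)) _ x ((2 * x + 0) / (2 * sqrt (x ^ 2 + s))) _).
  intro; reflexivity. field. apply Rgt_not_eq, sqrt_lt_R0; auto.
  apply (is_derive_sqrt (fun y => y ^ 2 + s)); auto. apply D_plus. apply D_sq. apply D_const.
Qed.

Lemma D_sqm r x : 0 < r - x ^ 2 -> is_derive (fun y => sqrt (r - y ^ 2)) x (- x * / sqrt (r - x ^ 2)).
Proof.
  intros H.
  apply (D_ext (fun y => sqrt (r - y ^ 2)) _ x ((0 - 2 * x) / (2 * sqrt (r - x ^ 2))) _).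
  intro; reflexivity. field. apply Rgt_not_eq, sqrt_lt_R0; auto.
  apply (is_derive_sqrt (fun y => r - y ^ 2)); auto. apply D_minus. apply D_const. apply D_sq.
Qed.

Lemma D_invuu s x : 0 < x ^ 2 + s ->
  is_derive (fun y => / uu s y) x (- x * / (uu s x * uu s x * uu s x)).
Proof.
  intros H. assert (0 < uu s x) by (apply uu_pos; auto).
  apply (D_ext (fun y => / uu s y) _ x (- (x * / uu s x) / (uu s x) ^ 2) _).
  intro; reflexivity. field. lra.
  apply D_inv. apply D_uu; auto. lra.
Qed.

Lemma C_uu s x : 0 < x ^ 2 + s -> continuous (uu s) x.
Proof. intros H. eapply ex_D. apply D_uu; auto. Qed.

Lemma D_opp (f : R -> R) x df : is_derive f x df -> is_derive (fun y => - f y) x (- df).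
Proof. intros; apply (is_derive_opp f x df); auto. Qed.

Lemma sum_scal (f : nat -> R) (a : R) m : sum_n_m (fun j => a * f j) 1 m = a * sum_n_m f 1 m.
Proof. induction m. rewrite !sum0. apply eq_sym, Rmult_0_r. rewrite !sumS, IHm. apply eq_sym, Rmult_plus_distr_l. Qed.

Lemma sum_ext_r (f g : nat -> R) m : (forall j, (1 <= j <= m)%nat -> f j = g j) -> sum_n_m f 1 m = sum_n_m g 1 m.
Proof. intros H. apply Rle_antisym; apply sum_le; intros j Hj; rewrite H; auto; lra. Qed.

Section Conc.
Variables (m l : nat) (sig rho b c : nat -> R) (k : nat) (eps : R).
Hypothesis Hsig : forall j, (1 <= j <= m)%nat -> 0 <= sig j.
Hypothesis Hrho : forall i, (1 <= i <= l)%nat -> rho l <= rho i.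
Hypothesis Hb : forall j, (1 <= j <= m)%nat -> 0 < b j.
Hypothesis Hc : forall i, (1 <= i <= l)%nat -> 0 < c i.
Hypothesis Hk : (1 <= k <= m)%nat.
Hypothesis Heps : eps = 1 \/ eps = -1.

Definition phiv x := - eps * Phif eps m b sig x.
Definition hv x := - eps - Sf m b sig x.
Definition hv' x := x * S3f m b sig x.

Lemma pos_u j x : (1 <= j <= m)%nat -> 0 < x -> 0 < x ^ 2 + sig j.
Proof. intros Hj Hx. assert (0 <= sig j) by auto. assert (0 < x ^ 2) by (apply pow_lt; auto). lra. Qed.

Lemma D_phiv x : 0 < x -> is_derive phiv x (x * hv x).
Proof.
  intros Hx.
  eapply (D_ext (fun y => - eps * (y ^ 2 * / 2 + eps * sum_n_m (fun j => b j * uu (sig j) y) 1 m)) phiv x).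
  - intro t. unfold phiv, Phif, sum1, uu. reflexivity.
  - shelve.
  - apply (D_mult (fun _ => - eps) (fun y => y ^ 2 * / 2 + eps * sum_n_m (fun j => b j * uu (sig j) y) 1 m)).
    apply D_const.
    apply (D_plus (fun y => y ^ 2 * / 2) (fun y => eps * sum_n_m (fun j => b j * uu (sig j) y) 1 m)).
    apply (D_mult (fun y => y ^ 2) (fun _ => / 2)). apply D_sq. apply D_const.
    apply (D_mult (fun _ => eps) (fun y => sum_n_m (fun j => b j * uu (sig j) y) 1 m)). apply D_const.
    apply (D_sum (fun j y => b j * uu (sig j) y) (fun j => 0 * uu (sig j) x + b j * (x * / uu (sig j) x))).
    intros j Hj. apply (D_mult (fun _ => b j) (uu (sig j))). apply D_const. apply D_uu. apply pos_u; auto.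
  Unshelve.
  rewrite (sum_ext_r (fun j => 0 * uu (sig j) x + b j * (x * / uu (sig j) x)) (fun j => x * (b j * / uu (sig j) x))) by (intros; ring).
  rewrite (sum_scal (fun j => b j * / uu (sig j) x) x). unfold hv, Sf. destruct Heps as [He|He]; rewrite He; field.
Qed.

Lemma D_hv x : 0 < x -> is_derive hv x (hv' x).
Proof.
  intros Hx.
  eapply (D_ext (fun y => - eps - sum_n_m (fun j => b j * / uu (sig j) y) 1 m) hv x).
  - intro t. reflexivity.
  - shelve.
  - apply (D_minus (fun _ => - eps) (fun y => sum_n_m (fun j => b j * / uu (sig j) y) 1 m)). apply D_const.
    apply (D_sum (fun j y => b j * / uu (sig j) y) (fun j => 0 * / uu (sig j) x + b j * (- x * / (uu (sig j) x * uu (sig j) x * uu (sig j) x)))).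
    intros j Hj. apply (D_mult (fun _ => b j) (fun y => / uu (sig j) y)). apply D_const. apply D_invuu. apply pos_u; auto.
  Unshelve.
  rewrite (sum_ext_r (fun j => 0 * / uu (sig j) x + b j * (- x * / (uu (sig j) x * uu (sig j) x * uu (sig j) x))) (fun j => (-x) * (b j * / (uu (sig j) x * uu (sig j) x * uu (sig j) x)))) by (intros; ring).
  rewrite (sum_scal (fun j => b j * / (uu (sig j) x * uu (sig j) x * uu (sig j) x)) (-x)). unfold hv', S3f. ring.
Qed.

Lemma pos_r i x : (1 <= i <= l)%nat -> x ^ 2 < rho l -> 0 < rho i - x ^ 2.
Proof. intros Hi Hx. assert (rho l <= rho i) by auto. lra. Qed.

Lemma D_E x : x ^ 2 < rho l -> is_derive (Ef l c rho) x (Ef' l c rho x).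
Proof.
  intros Hx.
  eapply (D_ext (fun y => exp (- sum_n_m (fun i => c i * sqrt (rho i - y ^ 2)) 1 l)) (Ef l c rho) x).
  - intro t. reflexivity.
  - shelve.
  - apply (D_comp exp (fun y => - sum_n_m (fun i => c i * sqrt (rho i - y ^ 2)) 1 l)).
    apply is_derive_exp. apply (D_opp (fun y => sum_n_m (fun i => c i * sqrt (rho i - y ^ 2)) 1 l)).
    apply (D_sum (fun i y => c i * sqrt (rho i - y ^ 2)) (fun i => 0 * sqrt (rho i - x ^ 2) + c i * (- x * / sqrt (rho i - x ^ 2)))).
    intros i Hi. apply (D_mult (fun _ => c i) (fun y => sqrt (rho i - y ^ 2))). apply D_const. apply D_sqm. apply pos_r; auto.
  Unshelve.
  rewrite (sum_ext_r (fun i => 0 * sqrt (rho i - x ^ 2) + c i * (- x * / sqrt (rho i - x ^ 2))) (fun j => (-1) * (c j * x * / sqrt (rho j - x ^ 2)))) by (intros; ring).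
  rewrite (sum_scal (fun j => c j * x * / sqrt (rho j - x ^ 2)) (-1)). unfold Ef', Ef, sum1. ring.
Qed.

Lemma uu_ge_x s x : 0 <= s -> 0 < x -> x <= uu s x.
Proof. intros. unfold uu. rewrite <- (sqrt_pow2 x) at 1 by lra. apply sqrt_le_1_alt. lra. Qed.

Lemma conc_hyps tau pi kap x : 0 < tau -> 0 < x -> x ^ 2 < rho l ->
  (sqrt (Rmax 0 (tau ^ 2 - sig k)) <= x -> -1/2 <= hv x -> pf (sig k) x <= pi) ->
  (hv x <= 1/2 -> kap * x <= hv' x) ->
  Hyps phiv hv hv' (Ef l c rho) (Ef' l c rho) (pf (sig k)) (pf' (sig k))
    (sqrt (Rmax 0 (tau ^ 2 - sig k))) tau pi kap x.
Proof.
  intros Htau Hx Hxl Hpi Hkap.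
  assert (Huk : 0 < x ^ 2 + sig k) by (apply pos_u; auto).
  assert (Uk : 0 < uu (sig k) x) by (apply uu_pos; auto).
  assert (Hsum3 : 0 <= S3f m b sig x).
  { apply sum_nonneg. intros j Hj. assert (0 < uu (sig j) x) by (apply uu_pos, pos_u; auto).
    apply Rmult_le_pos. apply Rlt_le; auto. apply Rlt_le, Rinv_0_lt_compat. repeat apply Rmult_lt_0_compat; auto. }
  assert (HE : 0 < Ef l c rho x) by apply exp_pos.
  assert (HsE : 0 <= sum1 (fun i => c i * sqrt (rho i - x ^ 2)) l).
  { apply sum_nonneg. intros i Hi. apply Rmult_le_pos. apply Rlt_le; auto. apply sqrt_pos. }
  unfold Hyps. repeat match goal with |- _ /\ _ => split end.
  - apply D_phiv; auto.
  - apply D_hv; auto.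
  - apply D_E; auto.
  - apply D_invuu; auto.
  - unfold hv', S3f. apply C_mult. apply C_id. apply (C_sum (fun j y => b j * / (uu (sig j) y * uu (sig j) y * uu (sig j) y))).
    intros j Hj. assert (0 < uu (sig j) x) by (apply uu_pos, pos_u; auto).
    assert (continuous (uu (sig j)) x) by (apply C_uu, pos_u; auto).
    cbv beta. apply C_mult. apply C_const. apply C_inv. cont. apply Rgt_not_eq. repeat apply Rmult_lt_0_compat; auto.
  - unfold Ef'. apply C_mult. eapply ex_D; apply D_E; auto.
    apply (C_sum (fun i y => c i * y * / sqrt (rho i - y ^ 2))).
    intros i Hi. assert (0 < rho i - x ^ 2) by (apply pos_r; auto).
    assert (continuous (fun y => sqrt (rho i - y ^ 2)) x) by (eapply ex_D; apply D_sqm; auto).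
    cbv beta. apply C_mult. cont. apply C_inv. auto. apply Rgt_not_eq, sqrt_lt_R0; auto.
  - unfold pf'. assert (continuous (uu (sig k)) x) by (apply C_uu; auto).
    apply C_mult. apply C_opp, C_id. apply C_inv. cont. apply Rgt_not_eq. repeat apply Rmult_lt_0_compat; auto.
  - unfold hv'. apply Rmult_le_pos; lra.
  - unfold Ef'. apply Rmult_le_pos. lra. apply sum_nonneg. intros i Hi.
    assert (0 < rho i - x ^ 2) by (apply pos_r; auto).
    assert (0 < sqrt (rho i - x ^ 2)) by (apply sqrt_lt_R0; auto).
    apply Rmult_le_pos. apply Rmult_le_pos; [apply Rlt_le; auto|lra]. apply Rlt_le, Rinv_0_lt_compat; auto.
  - unfold pf'. assert (0 < / (uu (sig k) x * uu (sig k) x * uu (sig k) x)).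
    { apply Rinv_0_lt_compat. repeat apply Rmult_lt_0_compat; auto. }
    nra.
  - lra.
  - unfold Ef. rewrite <- exp_0. apply exp_le_exp. unfold sum1 in *. lra.
  - unfold pf. apply Rinv_0_lt_compat; auto.
  - unfold pf. assert (x <= uu (sig k) x) by (apply uu_ge_x; auto; apply Hsig; auto).
    apply (Rmult_le_reg_r (uu (sig k) x)); auto. rewrite Rmult_assoc, Rinv_l by lra. lra.
  - intros Hs. unfold pf. apply Rinv_le_contravar; auto.
    assert (0 <= sqrt (Rmax 0 (tau ^ 2 - sig k))) by apply sqrt_pos.
    assert (sqrt (Rmax 0 (tau ^ 2 - sig k)) ^ 2 <= x ^ 2) by (apply pow_incr; lra).
    rewrite pow2_sqrt in H0 by apply Rmax_l.
    assert (tau ^ 2 - sig k <= Rmax 0 (tau ^ 2 - sig k)) by apply Rmax_r.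
    unfold uu. rewrite <- (sqrt_pow2 tau) by lra. apply sqrt_le_1_alt. lra.
  - auto.
  - auto.
Qed.

Lemma pf_tau tau x : 0 < tau -> 0 < x -> sqrt (Rmax 0 (tau ^ 2 - sig k)) <= x -> pf (sig k) x <= / tau.
Proof.
  intros Htau Hx Hs.
  assert (Huk : 0 < x ^ 2 + sig k) by (apply pos_u; auto).
  assert (Uk : 0 < uu (sig k) x) by (apply uu_pos; auto).
  unfold pf. apply Rinv_le_contravar; auto.
  assert (0 <= sqrt (Rmax 0 (tau ^ 2 - sig k))) by apply sqrt_pos.
  assert (sqrt (Rmax 0 (tau ^ 2 - sig k)) ^ 2 <= x ^ 2) by (apply pow_incr; lra).
  rewrite pow2_sqrt in H0 by apply Rmax_l.
  assert (tau ^ 2 - sig k <= Rmax 0 (tau ^ 2 - sig k)) by apply Rmax_r.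
  unfold uu. rewrite <- (sqrt_pow2 tau) by lra. apply sqrt_le_1_alt. lra.
Qed.

Lemma pf_pi x : eps = -1 -> 0 < x -> -1/2 <= hv x -> pf (sig k) x <= 3/2 * / b k.
Proof.
  intros He Hx Hh. unfold hv in Hh. rewrite He in Hh.
  assert (Hbk : 0 < b k) by auto.
  assert (b k * / uu (sig k) x <= Sf m b sig x).
  { unfold Sf. apply (sum_term (fun j => b j * / uu (sig j) x)); auto.
    intros j Hj. apply Rmult_le_pos. apply Rlt_le; auto. apply Rlt_le, Rinv_0_lt_compat, uu_pos, pos_u; auto. }
  unfold pf. apply (Rmult_le_reg_l (b k)); auto. rewrite <- Rmult_assoc, (Rmult_comm (b k) (3/2)), Rmult_assoc, Rinv_r by lra. lra.
Qed.

Lemma kapA x : eps = -1 -> 0 < x -> x ^ 2 < rho l -> (forall j, (1 <= j <= m)%nat -> sig j <= sig 1%nat) ->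
  hv x <= 1/2 -> / (2 * (1 + sig 1%nat + rho l)) * x <= hv' x.
Proof.
  intros He Hx Hxl Hs1 Hh. unfold hv in Hh. rewrite He in Hh.
  set (Q := 1 + sig 1%nat + rho l).
  assert (HQ : 0 < Q). { unfold Q. assert (0 <= sig 1%nat) by (apply Hsig; lia). assert (0 < x^2) by (apply pow_lt; lra). lra. }
  assert (S3f m b sig x >= Sf m b sig x * / Q).
  { unfold Sf, S3f. rewrite Rmult_comm, <- sum_scal. apply Rle_ge, sum_le. intros j Hj.
    assert (Hu : 0 < uu (sig j) x) by (apply uu_pos, pos_u; auto).
    assert (Huu : uu (sig j) x * uu (sig j) x <= Q).
    { unfold uu. rewrite sqrt_sqrt by (apply Rlt_le, pos_u; auto). assert (sig j <= sig 1%nat) by auto. unfold Q. lra. }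
    assert (0 < b j) by auto.
    replace (/ Q * (b j * / uu (sig j) x)) with (b j * / uu (sig j) x * / Q) by ring.
    replace (b j * / (uu (sig j) x * uu (sig j) x * uu (sig j) x)) with (b j * / uu (sig j) x * / (uu (sig j) x * uu (sig j) x)) by (field; lra).
    apply Rmult_le_compat_l. apply Rmult_le_pos; [lra|apply Rlt_le, Rinv_0_lt_compat; lra].
    apply Rinv_le_contravar; auto. apply Rmult_lt_0_compat; auto. }
  unfold hv'. rewrite (Rmult_comm _ x). apply Rmult_le_compat_l; [lra|].
  assert (1/2 <= Sf m b sig x) by lra.
  assert (/ (2 * Q) = 1/2 * / Q) by (field; lra).
  assert (1/2 * / Q <= Sf m b sig x * / Q) by (apply Rmult_le_compat_r; [apply Rlt_le, Rinv_0_lt_compat; lra | lra]).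
  lra.
Qed.

Lemma kapB x M : eps = -1 -> 0 < x -> (forall j, (1 <= j <= m)%nat -> b j <= M) ->
  hv x <= 1/2 -> / (8 * INR m ^ 3 * M ^ 2) * x <= hv' x.
Proof.
  intros He Hx HM Hh. unfold hv in Hh. rewrite He in Hh.
  assert (Hm : (1 <= m)%nat) by lia.
  destruct (sum_pigeon (fun j => b j * / uu (sig j) x) m (1/2) Hm) as [j [Hj Hjb]].
  { unfold Sf in Hh. lra. }
  assert (Hu : 0 < uu (sig j) x) by (apply uu_pos, pos_u; auto).
  assert (Hbj : 0 < b j) by auto. assert (HbM : b j <= M) by auto.
  assert (HmR : 1 <= INR m) by (apply (le_INR 1); lia).
  assert (S3f m b sig x >= b j * / (uu (sig j) x * uu (sig j) x * uu (sig j) x)).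
  { apply Rle_ge. unfold S3f. apply (sum_term (fun j => b j * / (uu (sig j) x * uu (sig j) x * uu (sig j) x))); auto.
    intros i Hi. assert (0 < uu (sig i) x) by (apply uu_pos, pos_u; auto).
    apply Rmult_le_pos. apply Rlt_le; auto. apply Rlt_le, Rinv_0_lt_compat. repeat apply Rmult_lt_0_compat; auto. }
  set (w := b j * / uu (sig j) x) in *.
  assert (Hw : b j * / (uu (sig j) x * uu (sig j) x * uu (sig j) x) = w ^ 3 * / (b j ^ 2)).
  { unfold w. field. split; lra. }
  rewrite Hw in H.
  assert (Hw0 : 1/2 / INR m <= w) by exact Hjb.
  assert (0 < 1/2 / INR m) by (apply Rdiv_lt_0_compat; lra).
  assert ((1/2 / INR m) ^ 3 <= w ^ 3) by (apply pow_incr; lra).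
  assert (b j ^ 2 <= M ^ 2) by (apply pow_incr; lra).
  assert (0 < b j ^ 2) by (apply pow_lt; lra).
  assert (/ (8 * INR m ^ 3 * M ^ 2) <= w ^ 3 * / b j ^ 2).
  { replace (/ (8 * INR m ^ 3 * M ^ 2)) with ((1/2 / INR m) ^ 3 * / M ^ 2) by (field; split; lra).
    apply Rmult_le_compat. apply pow_le; lra. apply Rlt_le, Rinv_0_lt_compat; lra. auto.
    apply Rinv_le_contravar; auto. }
  unfold hv'. rewrite (Rmult_comm _ x). apply Rmult_le_compat_l; lra.
Qed.

Lemma hv'_nonneg x : 0 < x -> 0 <= hv' x.
Proof.
  intros Hx. unfold hv'. apply Rmult_le_pos; [lra|]. apply sum_nonneg. intros j Hj.
  assert (0 < uu (sig j) x) by (apply uu_pos, pos_u; auto).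
  apply Rmult_le_pos. apply Rlt_le; auto. apply Rlt_le, Rinv_0_lt_compat. repeat apply Rmult_lt_0_compat; auto.
Qed.

Lemma s_le_tau tau : 0 < tau -> 0 <= sqrt (Rmax 0 (tau ^ 2 - sig k)) <= tau.
Proof.
  intros Ht. split. apply sqrt_pos. apply Rle_trans with (sqrt (tau ^ 2)).
  - apply sqrt_le_1_alt. assert (0 <= sig k) by auto. apply Rmax_lub. apply pow_le; lra. lra.
  - rewrite sqrt_pow2; lra.
Qed.

Definition fmid th x := cos (phiv x + th) * (x * (Ef l c rho x * pf (sig k) x)).

Lemma mid_plus a0 b0 th : eps = 1 -> 0 < a0 <= b0 -> b0 ^ 2 < rho l ->
  Rabs (RInt (fmid th) a0 b0) <= 6.
Proof.
  intros He Hab Hb0.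
  assert (Hx2 : forall x, a0 <= x <= b0 -> x ^ 2 < rho l).
  { intros x Hx. assert (x ^ 2 <= b0 ^ 2) by (apply pow_incr; lra). lra. }
  assert (H := decomp_plus phiv hv hv' (Ef l c rho) (Ef' l c rho) (pf (sig k)) (pf' (sig k))
     (sqrt (Rmax 0 (1 ^ 2 - sig k))) 1 (/ 1) 0 a0 b0 th).
  unfold fmid. replace 6 with (1 + 5 / 1) by field. apply H; try lra.
  - intros x Hx. apply conc_hyps; try lra. apply Hx2; auto.
    intros Hs _. apply pf_tau; lra.
    intros _. rewrite Rmult_0_l. apply hv'_nonneg; lra.
  - intros x Hx. unfold hv. rewrite He.
    assert (0 <= Sf m b sig x).
    { apply sum_nonneg. intros j Hj. apply Rmult_le_pos. apply Rlt_le; auto.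
      apply Rlt_le, Rinv_0_lt_compat, uu_pos, pos_u; auto; lra. }
    lra.
  - apply s_le_tau; lra.
Qed.

Lemma mid_A a0 b0 th : eps = -1 -> 0 < a0 <= b0 -> b0 ^ 2 < rho l ->
  (forall j, (1 <= j <= m)%nat -> sig j <= sig 1%nat) ->
  Rabs (RInt (fmid th) a0 b0) <= 33 * Rpower (1 + sig 1%nat + rho l) (1/4).
Proof.
  intros He Hab Hb0 Hs1.
  assert (Hx2 : forall x, a0 <= x <= b0 -> x ^ 2 < rho l).
  { intros x Hx. assert (x ^ 2 <= b0 ^ 2) by (apply pow_incr; lra). lra. }
  set (Q := 1 + sig 1%nat + rho l).
  assert (HQ : 1 <= Q).
  { unfold Q. assert (0 <= sig 1%nat) by (apply Hsig; lia). assert (0 <= b0 ^ 2) by (apply pow2_ge_0). lra. }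
  set (q := sqrt Q). set (t := sqrt q).
  assert (Hq : 1 <= q) by (unfold q; rewrite <- sqrt_1; apply sqrt_le_1_alt; lra).
  assert (Ht : 1 <= t) by (unfold t; rewrite <- sqrt_1; apply sqrt_le_1_alt; lra).
  assert (Hqt : q = t * t) by (unfold t; rewrite sqrt_sqrt; lra).
  assert (HQq : Q = q * q) by (unfold q; rewrite sqrt_sqrt; lra).
  assert (Hpow : Rpower Q (1/4) = t).
  { replace (1/4) with (/2 * /2) by field. rewrite <- Rpower_mult.
    rewrite (Rpower_sqrt Q) by lra. fold q. rewrite (Rpower_sqrt q) by lra. reflexivity. }
  rewrite Hpow.
  assert (H := decomp phiv hv hv' (Ef l c rho) (Ef' l c rho) (pf (sig k)) (pf' (sig k))
     (sqrt (Rmax 0 (t ^ 2 - sig k))) t (/ t) (/ (2 * Q)) a0 b0 (/ (2 * q)) th).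
  unfold fmid. eapply Rle_trans. apply H.
  - intros x Hx. apply conc_hyps; try lra. apply Hx2; auto.
    intros Hs _. apply pf_tau; lra.
    intros Hh. apply kapA; auto; try lra; try (apply Hx2; auto).
  - lra.
  - apply s_le_tau; lra.
  - split. apply Rinv_0_lt_compat; lra. apply Rle_trans with (/ 2); [apply Rinv_le_contravar; lra|lra].
  - apply Rinv_0_lt_compat; lra.
  - apply Rlt_le, Rinv_0_lt_compat; lra.
  - lra.
  - rewrite HQq, Hqt.
    assert (E1 : 10 * / t / / (2 * (t * t)) = 20 * t) by (field; lra).
    assert (E2 : 2 * / t * / (2 * (t * t)) / / (2 * (t * t * (t * t))) = 2 * t) by (field; lra).
    rewrite E1, E2. assert (10 / t <= 10 * t).
    { unfold Rdiv. apply Rmult_le_compat_l; [lra|]. apply Rle_trans with 1; [|lra].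
      rewrite <- Rinv_1. apply Rinv_le_contravar; lra. }
    lra.
Qed.

Lemma mid_B a0 b0 th M : eps = -1 -> 0 < a0 <= b0 -> b0 ^ 2 < rho l ->
  (forall j, (1 <= j <= m)%nat -> b j <= M) ->
  Rabs (RInt (fmid th) a0 b0) <= 65 * (Rpower (INR m) (3/2) * / b k * M).
Proof.
  intros He Hab Hb0 HM.
  assert (Hx2 : forall x, a0 <= x <= b0 -> x ^ 2 < rho l).
  { intros x Hx. assert (x ^ 2 <= b0 ^ 2) by (apply pow_incr; lra). lra. }
  assert (Hbk : 0 < b k) by auto. assert (HbkM : b k <= M) by auto.
  assert (HmR : 1 <= INR m) by (apply (le_INR 1); lia).
  set (R3 := Rpower (INR m) (3/2)).
  assert (HR3 : 1 <= R3).
  { unfold R3. rewrite <- (Rpower_O (INR m)) by lra. apply Rle_Rpower; lra. }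
  assert (HR3sq : R3 * R3 = INR m ^ 3).
  { unfold R3. rewrite <- Rpower_plus. replace (3/2 + 3/2) with (INR 3) by (simpl; lra).
    apply Rpower_pow. lra. }
  assert (HB1 : 1 <= R3 * / b k * M).
  { assert (1 <= / b k * M).
    { apply (Rmult_le_reg_l (b k)); auto. rewrite <- Rmult_assoc, Rinv_r by lra. lra. }
    replace (R3 * / b k * M) with (R3 * (/ b k * M)) by ring. nra. }
  set (pi := Rmin (/ 1) (3/2 * / b k)).
  assert (Hpi1 : pi <= 1) by (unfold pi; rewrite Rinv_1; apply Rmin_l).
  assert (Hpi2 : pi <= 3/2 * / b k) by apply Rmin_r.
  assert (Hpi0 : 0 <= pi).
  { unfold pi. apply Rmin_glb. rewrite Rinv_1; lra. apply Rmult_le_pos; [lra|apply Rlt_le, Rinv_0_lt_compat; lra]. }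
  set (d0 := / (3 * R3 * M)).
  assert (Hd0 : 0 < d0) by (apply Rinv_0_lt_compat; nra).
  assert (Hkap : forall x, a0 <= x <= b0 -> hv x <= 1/2 -> d0 ^ 2 * x <= hv' x).
  { intros x Hx Hh. eapply Rle_trans; [|apply (kapB x M); auto; lra].
    apply Rmult_le_compat_r; [lra|]. unfold d0. rewrite <- Rinv_pow by nra.
    apply Rinv_le_contravar. assert (0 < INR m ^ 3) by (apply pow_lt; lra). assert (0 < M ^ 2) by (apply pow_lt; lra). nra.
    replace ((3 * R3 * M) ^ 2) with (9 * (R3 * R3) * M ^ 2) by ring. rewrite HR3sq.
    assert (0 <= INR m ^ 3 * M ^ 2) by (apply Rmult_le_pos; apply pow_le; lra). nra. }
  assert (Hyp : forall x, a0 <= x <= b0 -> Hyps phiv hv hv' (Ef l c rho) (Ef' l c rho) (pf (sig k)) (pf' (sig k))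
     (sqrt (Rmax 0 (1 ^ 2 - sig k))) 1 pi (d0 ^ 2) x).
  { intros x Hx. apply conc_hyps; try lra. apply Hx2; auto.
    intros Hs Hh. apply Rmin_glb. apply pf_tau; lra. apply pf_pi; auto; lra.
    apply Hkap; auto. }
  unfold fmid. destruct (Rle_dec d0 (1/2)) as [Hd|Hd].
  - eapply Rle_trans. apply (decomp _ _ _ _ _ _ _ _ _ _ _ a0 b0 d0 th Hyp); try lra.
    apply s_le_tau; lra. apply pow_lt; lra.
    assert (E1 : 2 * pi * d0 / d0 ^ 2 = 2 * pi / d0) by (field; lra).
    rewrite E1.
    assert (E2 : / d0 = 3 * R3 * M) by (unfold d0; rewrite Rinv_inv; reflexivity).
    unfold Rdiv. rewrite E2.
    assert (pi * (3 * R3 * M) <= 3/2 * / b k * (3 * R3 * M)) by (apply Rmult_le_compat_r; nra).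
    assert (E3 : 3/2 * / b k * (3 * R3 * M) = 9/2 * (R3 * / b k * M)) by (field; lra).
    rewrite E3 in H.
    rewrite Rinv_1. lra.
  - eapply Rle_trans. apply (decomp _ _ _ _ _ _ _ _ _ _ _ a0 b0 (1/2) th Hyp); try lra.
    apply s_le_tau; lra. apply pow_lt; lra.
    assert (Hk4 : 1/4 < d0 ^ 2) by nra.
    assert (2 * pi * (1/2) / d0 ^ 2 <= 4).
    { unfold Rdiv. replace (2 * pi * (1 * / 2) * / d0 ^ 2) with (pi * / d0 ^ 2) by (field; lra).
      assert (/ d0 ^ 2 < 4). { replace 4 with (/ (1/4)) by field. apply Rinv_lt_contravar; nra. }
      assert (0 < / d0 ^ 2) by (apply Rinv_0_lt_compat; nra). nra. }
    unfold Rdiv in *. rewrite Rinv_1. lra.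
Qed.

Definition gth th x := cos (Phif eps m b sig x + th) * (Ef l c rho x * (x * pf (sig k) x)).

Lemma C_sq x : continuous (fun y => y ^ 2) x.
Proof. eapply ex_D. apply D_sq. Qed.

Lemma C_sqrtc (f : R -> R) x : continuous f x -> continuous (fun y => sqrt (f y)) x.
Proof. intros H. apply (C_comp sqrt f x H). apply continuous_sqrt. Qed.

Lemma C_Phif x : continuous (Phif eps m b sig) x.
Proof.
  unfold Phif, sum1.
  apply (C_plus (fun y => y ^ 2 / 2) (fun y => eps * sum_n_m (fun j => b j * sqrt (y ^ 2 + sig j)) 1 m)).
  - apply (C_mult (fun y => y ^ 2) (fun _ => / 2)). apply C_sq. apply C_const.
  - apply (C_mult (fun _ => eps) (fun y => sum_n_m (fun j => b j * sqrt (y ^ 2 + sig j)) 1 m)). apply C_const.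
    apply (C_sum (fun j y => b j * sqrt (y ^ 2 + sig j))). intros j Hj.
    apply (C_mult (fun _ => b j) (fun y => sqrt (y ^ 2 + sig j))). apply C_const.
    apply (C_sqrtc (fun y => y ^ 2 + sig j)). apply (C_plus (fun y => y ^ 2) (fun _ => sig j)). apply C_sq. apply C_const.
Qed.

Lemma C_Ef x : continuous (Ef l c rho) x.
Proof.
  unfold Ef, sum1.
  apply (C_comp exp (fun y => - sum_n_m (fun i => c i * sqrt (rho i - y ^ 2)) 1 l)).
  - apply (C_opp (fun y => sum_n_m (fun i => c i * sqrt (rho i - y ^ 2)) 1 l)).
    apply (C_sum (fun i y => c i * sqrt (rho i - y ^ 2))). intros i Hi.
    apply (C_mult (fun _ => c i) (fun y => sqrt (rho i - y ^ 2))). apply C_const.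
    apply (C_sqrtc (fun y => rho i - y ^ 2)). apply (C_minus (fun _ => rho i) (fun y => y ^ 2)). apply C_const. apply C_sq.
  - eapply ex_D. apply is_derive_exp.
Qed.

Lemma gth_bnd th x : 0 <= x -> Rabs (gth th x) <= 1.
Proof.
  intros Hx. unfold gth.
  assert (HE0 : 0 < Ef l c rho x) by apply exp_pos.
  assert (HE1 : Ef l c rho x <= 1).
  { unfold Ef. rewrite <- exp_0. apply exp_le_exp.
    assert (0 <= sum1 (fun i => c i * sqrt (rho i - x ^ 2)) l).
    { apply sum_nonneg. intros i Hi. apply Rmult_le_pos. apply Rlt_le; auto. apply sqrt_pos. }
    lra. }
  assert (Hp : 0 <= x * pf (sig k) x <= 1).
  { destruct (Rle_lt_or_eq_dec 0 x Hx) as [Hx'|Hx'].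
    - assert (Huk : 0 < x ^ 2 + sig k) by (apply pos_u; auto).
      assert (Uk : 0 < uu (sig k) x) by (apply uu_pos; auto).
      assert (x <= uu (sig k) x) by (apply uu_ge_x; auto).
      unfold pf. split. apply Rmult_le_pos. lra. apply Rlt_le, Rinv_0_lt_compat; auto.
      apply (Rmult_le_reg_r (uu (sig k) x)); auto. rewrite Rmult_assoc, Rinv_l by lra. lra.
    - subst. rewrite Rmult_0_l. lra. }
  rewrite Rabs_mult. apply L4. split. apply Rabs_pos. apply Rabs_cos_le_1.
  rewrite Rabs_pos_eq by (apply Rmult_le_pos; lra).
  split. apply Rmult_le_pos; lra. apply Rle_trans with (1 * 1); [apply Rmult_le_compat; lra | lra].
Qed.

Lemma gth_ex th : 0 < rho l -> ex_RInt (gth th) 0 (sqrt (rho l)).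
Proof.
  intros Hl.
  assert (Hsk : 0 <= sig k) by auto.
  destruct (Rle_lt_or_eq_dec 0 (sig k) Hsk) as [Hp|Hz].
  - apply (@ex_RInt_continuous R_CompleteNormedModule). intros z _. unfold gth.
    apply (C_mult (fun y => cos (Phif eps m b sig y + th)) (fun y => Ef l c rho y * (y * pf (sig k) y))).
    + apply (C_cos (fun y => Phif eps m b sig y + th)). apply (C_plus (Phif eps m b sig) (fun _ => th)).
      apply C_Phif. apply C_const.
    + apply (C_mult (Ef l c rho) (fun y => y * pf (sig k) y)). apply C_Ef.
      apply (C_mult (fun y => y) (pf (sig k))). apply C_id.
      unfold pf. apply (C_inv (uu (sig k))). unfold uu. apply (C_sqrtc (fun y => y ^ 2 + sig k)).
      apply (C_plus (fun y => y ^ 2) (fun _ => sig k)). apply C_sq. apply C_const.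
      apply Rgt_not_eq. apply uu_pos. assert (0 <= z ^ 2) by apply pow2_ge_0. lra.
  - assert (Ex : ex_RInt (fun y => cos (Phif eps m b sig y + th) * Ef l c rho y) 0 (sqrt (rho l))).
    { apply (@ex_RInt_continuous R_CompleteNormedModule). intros z _.
      apply (C_mult (fun y => cos (Phif eps m b sig y + th)) (Ef l c rho)).
      + apply (C_cos (fun y => Phif eps m b sig y + th)). apply (C_plus (Phif eps m b sig) (fun _ => th)).
        apply C_Phif. apply C_const.
      + apply C_Ef. }
    destruct Ex as [v Hv]. exists v.
    apply (is_RInt_ext (fun y => cos (Phif eps m b sig y + th) * Ef l c rho y)); auto.
    intros x Hx. rewrite Rmin_left in Hx by (apply sqrt_pos). rewrite Rmax_right in Hx by (apply sqrt_pos).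
    unfold gth, pf, uu. rewrite <- Hz, Rplus_0_r, sqrt_pow2 by lra. rewrite Rinv_r by lra. rewrite Rmult_1_r. reflexivity.
Qed.

Lemma key th M : 0 < rho l -> (forall j, (1 <= j <= m)%nat -> sig j <= sig 1%nat) ->
  (forall j, (1 <= j <= m)%nat -> b j <= M) ->
  Rabs (RInt (gth th) 0 (sqrt (rho l))) <=
    65 * Rmin (Rpower (1 + sig 1%nat + rho l) (1/4)) (Rpower (INR m) (3/2) * / b k * M).
Proof.
  intros Hl Hs1 HM.
  set (L := sqrt (rho l)).
  assert (HL : 0 < L) by (apply sqrt_lt_R0; auto).
  assert (HL2 : L ^ 2 = rho l) by (unfold L; rewrite pow2_sqrt; lra).
  set (Mn := Rmin (Rpower (1 + sig 1%nat + rho l) (1/4)) (Rpower (INR m) (3/2) * / b k * M)).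
  assert (HMn : 1 <= Mn).
  { unfold Mn. apply Rmin_glb.
    - assert (0 <= sig 1%nat) by (apply Hsig; lia).
      apply Rle_trans with (Rpower (1 + sig 1%nat + rho l) 0); [rewrite Rpower_O; lra | apply Rle_Rpower; lra].
    - assert (HmR : 1 <= INR m) by (apply (le_INR 1); lia).
      assert (1 <= Rpower (INR m) (3/2)) by (rewrite <- (Rpower_O (INR m)) by lra; apply Rle_Rpower; lra).
      assert (Hbk : 0 < b k) by auto. assert (b k <= M) by auto.
      assert (1 <= / b k * M).
      { apply (Rmult_le_reg_l (b k)); auto. rewrite <- Rmult_assoc, Rinv_r by lra. lra. }
      replace (Rpower (INR m) (3/2) * / b k * M) with (Rpower (INR m) (3/2) * (/ b k * M)) by ring. nra. }
  assert (Ex := gth_ex th Hl). fold L in Ex.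
  assert (Hmid : forall e, 0 < e < L / 2 -> Rabs (RInt (gth th) e (L - e)) <= 65 * Mn).
  { intros e He.
    assert (Hb0 : (L - e) ^ 2 < rho l).
    { rewrite <- HL2. assert (0 < L - e) by lra. assert (L - e < L) by lra. simpl. nra. }
    rewrite (RInt_ext (gth th) (fmid (- eps * th))).
    2:{ intros x _. unfold gth, fmid, phiv. match goal with |- ?A = ?B => change (@eq R A B) end.
        replace (- eps * Phif eps m b sig x + - eps * th) with (- eps * (Phif eps m b sig x + th)) by ring.
        destruct Heps as [He1|He1]; rewrite He1.
        - replace (- (1) * (Phif 1 m b sig x + th)) with (- (Phif 1 m b sig x + th)) by ring. rewrite cos_neg. ring.
        - replace (- (-1) * (Phif (-1) m b sig x + th)) with (Phif (-1) m b sig x + th) by ring. ring. }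
    destruct Heps as [He1|He1].
    - eapply Rle_trans. apply mid_plus; auto; lra. lra.
    - assert (HA := mid_A e (L - e) (- eps * th) He1 ltac:(lra) Hb0 Hs1).
      assert (HB := mid_B e (L - e) (- eps * th) M He1 ltac:(lra) Hb0 HM).
      assert (0 < Rpower (1 + sig 1%nat + rho l) (1/4)) by (unfold Rpower; apply exp_pos).
      unfold Mn. unfold Rmin. destruct (Rle_dec _ _); lra. }
  assert (Hall : forall e, 0 < e < L / 2 -> Rabs (RInt (gth th) 0 L) <= 2 * e + 65 * Mn).
  { intros e He.
    assert (Ee : ex_RInt (gth th) e L) by (apply (@ex_RInt_Chasles_2 R_CompleteNormedModule) with 0; auto; lra).
    rewrite (chasles (gth th) 0 e L ltac:(lra) Ex).
    rewrite (chasles (gth th) e (L - e) L ltac:(lra) Ee).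
    assert (H1 : Rabs (RInt (gth th) 0 e) <= e - 0).
    { apply RInt_triv. lra. apply (@ex_RInt_Chasles_1 R_CompleteNormedModule) with L; auto; lra. intros; apply gth_bnd; lra. }
    assert (H3 : Rabs (RInt (gth th) (L - e) L) <= L - (L - e)).
    { apply RInt_triv. lra. apply (@ex_RInt_Chasles_2 R_CompleteNormedModule) with 0; auto; lra. intros; apply gth_bnd; lra. }
    assert (H2 := Hmid e He).
    assert (Rabs (RInt (gth th) 0 e + (RInt (gth th) e (L - e) + RInt (gth th) (L - e) L)) <=
      Rabs (RInt (gth th) 0 e) + (Rabs (RInt (gth th) e (L - e)) + Rabs (RInt (gth th) (L - e) L))).
    { eapply Rle_trans; [apply Rabs_triang|]. apply Rplus_le_compat_l. apply Rabs_triang. }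
    lra. }
  fold Mn. destruct (Rle_dec (Rabs (RInt (gth th) 0 L)) (65 * Mn)) as [Hok|Hko]; auto.
  exfalso. set (X := Rabs (RInt (gth th) 0 L)) in *.
  set (e := Rmin (L / 4) ((X - 65 * Mn) / 4)).
  assert (He1 : 0 < e) by (unfold e; apply Rmin_glb_lt; lra).
  assert (He2 : e <= L / 4) by apply Rmin_l.
  assert (He3 : e <= (X - 65 * Mn) / 4) by apply Rmin_r.
  assert (H := Hall e ltac:(lra)). lra.
Qed.

End Conc.

Lemma mono_dec (f : nat -> R) n : (forall j, (1 <= j < n)%nat -> f (S j) <= f j) ->
  forall i j, (1 <= i)%nat -> (i <= j)%nat -> (j <= n)%nat -> f j <= f i.
Proof.
  intros H i j Hi Hij Hjn. induction j. lia.
  destruct (Nat.eq_dec i (S j)). subst; lra.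
  assert (f j <= f i) by (apply IHj; lia). assert (f (S j) <= f j) by (apply H; lia). lra.
Qed.

Lemma fold_max_ge (a : R) (lst : list R) :
  a <= fold_right Rmax a lst /\ forall y, In y lst -> y <= fold_right Rmax a lst.
Proof.
  induction lst; simpl. split; [lra| tauto]. destruct IHlst as [H1 H2]. split.
  - eapply Rle_trans; [apply H1| apply Rmax_r].
  - intros y [Hy|Hy]. subst; apply Rmax_l. eapply Rle_trans; [apply H2; auto| apply Rmax_r].
Qed.

Lemma max1_ge (b : nat -> R) m j : (1 <= j <= m)%nat -> b j <= max1 b m.
Proof.
  intros Hj. unfold max1. apply fold_max_ge. apply in_map. apply in_seq. lia.
Qed.

Lemma int_fst m l k sigma rho b c eps lam :
  fst (integrand m l k sigma rho b c eps lam) = gth m l sigma rho b c k eps 0 lam.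
Proof.
  unfold integrand, gth, cis, Phif, Ef, pf, uu. simpl. rewrite Rplus_0_r, cos_plus. unfold Rdiv. ring.
Qed.

Lemma int_snd m l k sigma rho b c eps lam :
  snd (integrand m l k sigma rho b c eps lam) = gth m l sigma rho b c k eps (- (PI / 2)) lam.
Proof.
  unfold integrand, gth, cis, Phif, Ef, pf, uu. simpl.
  rewrite cos_plus, cos_neg, sin_neg, cos_PI2, sin_PI2, sin_plus. unfold Rdiv. ring.
Qed.

Theorem lemma7p5 :
  exists C0 : R,
  forall (m l : nat) (sigma rho b c : nat -> R) (k : nat) (eps : R),
    (1 <= m)%nat -> (1 <= l)%nat ->
    (forall j, (1 <= j < m)%nat -> sigma (S j) <= sigma j) ->
    0 <= sigma m ->
    (forall i, (1 <= i < l)%nat -> rho (S i) <= rho i) ->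
    0 < rho l ->
    (forall j, (1 <= j <= m)%nat -> 0 < b j) ->
    (forall i, (1 <= i <= l)%nat -> 0 < c i) ->
    (1 <= k <= m)%nat ->
    (eps = 1 \/ eps = -1) ->
    Cmod (RInt (V := C_R_CompleteNormedModule)
            (integrand m l k sigma rho b c eps) 0 (sqrt (rho l)))
    <= C0 * Rmin (Rpower (1 + sigma 1%nat + rho l) (1/4))
                 (Rpower (INR m) (3/2) * / b k * max1 b m).
Proof.
  exists 130.
  intros m l sigma rho b c k eps Hm Hl Hsm Hs0 Hrm Hr0 Hb Hc Hk Heps.
  assert (Hsig : forall j, (1 <= j <= m)%nat -> 0 <= sigma j).
  { intros j Hj. assert (sigma m <= sigma j) by (apply (mono_dec sigma m Hsm j m); lia). lra. }
  assert (Hs1 : forall j, (1 <= j <= m)%nat -> sigma j <= sigma 1%nat).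
  { intros j Hj. apply (mono_dec sigma m Hsm 1 j); lia. }
  assert (Hrho : forall i, (1 <= i <= l)%nat -> rho l <= rho i).
  { intros i Hi. apply (mono_dec rho l Hrm i l); lia. }
  assert (HM : forall j, (1 <= j <= m)%nat -> b j <= max1 b m) by (intros; apply max1_ge; auto).
  set (Mn := Rmin (Rpower (1 + sigma 1%nat + rho l) (1/4)) (Rpower (INR m) (3/2) * / b k * max1 b m)).
  assert (K0 := key m l sigma rho b c k eps Hsig Hrho Hb Hc Hk Heps 0 (max1 b m) Hr0 Hs1 HM).
  assert (K1 := key m l sigma rho b c k eps Hsig Hrho Hb Hc Hk Heps (- (PI / 2)) (max1 b m) Hr0 Hs1 HM).
  fold Mn in K0, K1.
  set (L := sqrt (rho l)) in *.
  assert (E0 := gth_ex m l sigma rho b c k eps Hsig Hk 0 Hr0).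
  assert (E1 := gth_ex m l sigma rho b c k eps Hsig Hk (- (PI / 2)) Hr0).
  fold L in E0, E1.
  assert (I : is_RInt (V := C_R_CompleteNormedModule) (integrand m l k sigma rho b c eps) 0 L
              (RInt (gth m l sigma rho b c k eps 0) 0 L, RInt (gth m l sigma rho b c k eps (- (PI / 2))) 0 L)).
  { apply (is_RInt_fct_extend_pair (U := R_NormedModule) (V := R_NormedModule)).
    - apply (is_RInt_ext (gth m l sigma rho b c k eps 0)).
      intros x _. rewrite int_fst. reflexivity.
      apply (@RInt_correct R_CompleteNormedModule); auto.
    - apply (is_RInt_ext (gth m l sigma rho b c k eps (- (PI / 2)))).
      intros x _. rewrite int_snd. reflexivity.
      apply (@RInt_correct R_CompleteNormedModule); auto. }
  rewrite (is_RInt_unique _ _ _ _ I).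
  eapply Rle_trans. apply Cmod_2Rmax. simpl.
  assert (Hs2 : sqrt 2 <= 2).
  { apply Rle_trans with (sqrt 4). apply sqrt_le_1_alt; lra.
    replace 4 with (2 * 2) by ring. rewrite sqrt_square; lra. }
  assert (0 <= Rmax (Rabs (RInt (gth m l sigma rho b c k eps 0) 0 L))
                    (Rabs (RInt (gth m l sigma rho b c k eps (- (PI / 2))) 0 L))).
  { eapply Rle_trans; [apply Rabs_pos|apply Rmax_l]. }
  assert (Rmax (Rabs (RInt (gth m l sigma rho b c k eps 0) 0 L))
                    (Rabs (RInt (gth m l sigma rho b c k eps (- (PI / 2))) 0 L)) <= 65 * Mn).
  { apply Rmax_lub; auto. }
  assert (0 <= sqrt 2) by apply sqrt_pos.
  apply Rle_trans with (2 * (65 * Mn)). apply Rmult_le_compat; auto. lra.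
Qed.
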